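(* Let $k\subseteq K$ be algebraically closed fields, $X=\mathbb{A}^s$, $B=\mathbb{A}^t$, $Y\subseteq X\times B$ a constructible subset, and $A\subseteq X(K)$. Suppose there exist $\alpha,\beta\in A$ with the following property: for every $m\in\mathbb{N}$ and $i\le m$, letting $p^{(m)}_i\in X^m(K)$ be the $m$-tuple $(\alpha,\dots,\alpha,\beta,\alpha,\dots,\alpha)$ with $\beta$ in the $i$th place, and $P^{(m)}_i$ the $k$-Zariski closure of $\{p^{(m)}_i\}$, we have $p^{(m)}_i\notin P^{(m)}_j$ for all $i\neq j$. Then there are a natural number $n$ and a $k$-constructible set $Z\subseteq X\times X^n$ such that for every $b\in B(K)$ there is $a\in A^n$ with $Y_b(K)\cap A=Z_a(K)\cap A$.
   Context: For a set $Y\subseteq X\times B$ and $b\in B$, $Y_b=\{x\in X:(x,b)\in Y\}$ denotes the fibre; similarly $Z_a=\{x\in X:(x,a)\in Z\}$ for $a\in X^n$. The $k$-Zariski closure of a point is the smallest Zariski-closed set defined over $k$ containing it. *)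

(* Defs.v *)
From mathcomp Require Import all_boot all_algebra.
From mathcomp Require Import mpoly.
Set Implicit Arguments. Unset Strict Implicit. Unset Printing Implicit Defensive.
Import GRing.Theory.
Local Open Scope ring_scope.

(* Points of affine N-space A^N(K) are row vectors 'rV[K]_N; subsets of
   A^N(K) are predicates 'rV[K]_N -> Prop.  The subfield k of K is given by
   a (necessarily injective) field morphism f : k -> K. *)

(* Syntax of constructible sets: finite boolean combinations of zero sets
   of polynomials with coefficients in R. *)
Inductive cform (R : nzRingType) (N : nat) : Type :=
  | CTrue
  | CZero of {mpoly R[N]}
  | CNot of cform R N
  | CAnd of cform R N & cform R N
  | COr of cform R N & cform R N.

Definition coords (K : nzRingType) (N : nat) (x : 'rV[K]_N) : 'I_N -> K :=
  fun i => x 0 i.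

Fixpoint cform_sat (R K : comNzRingType) (f : R -> K) (N : nat)
    (phi : cform R N) (x : 'rV[K]_N) : Prop :=
  match phi with
  | CTrue => True
  | CZero p => (map_mpoly f p).@[coords x] = 0
  | CNot psi => ~ cform_sat f psi x
  | CAnd a b => cform_sat f a x /\ cform_sat f b x
  | COr a b => cform_sat f a x \/ cform_sat f b x
  end.

Definition constructible_over (R K : comNzRingType) (f : R -> K) (N : nat)
    (S : 'rV[K]_N -> Prop) : Prop :=
  exists phi : cform R N, forall x, S x <-> cform_sat f phi x.

Definition constructible (K : comNzRingType) (N : nat) (S : 'rV[K]_N -> Prop) :=
  constructible_over (@id K) S.

Definition kclosed (k K : comNzRingType) (f : k -> K) (N : nat)
    (S : 'rV[K]_N -> Prop) : Prop :=
  exists ps : seq {mpoly k[N]},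
    forall x, S x <-> (forall p, p \in ps -> (map_mpoly f p).@[coords x] = 0).

Definition kzar_closure (k K : comNzRingType) (f : k -> K) (N : nat)
    (p : 'rV[K]_N) : 'rV[K]_N -> Prop :=
  fun x => forall S, kclosed f S -> S p -> S x.

(* An m-tuple of points of A^s, viewed as a point of A^(m*s) = (A^s)^m. *)
Definition tuple_pt (K : nzRingType) (s m : nat) (a : 'I_m -> 'rV[K]_s)
    : 'rV[K]_(m * s) :=
  mxvec (\matrix_(i < m) a i).

Definition p_tuple (K : nzRingType) (s m : nat) (alpha beta : 'rV[K]_s)
    (i : 'I_m) : 'I_m -> 'rV[K]_s :=
  fun j => if j == i then beta else alpha.

(* Main.v *)
Require Import Defs.
From mathcomp Require Import all_boot all_algebra.
From mathcomp Require Import mpoly.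
From mathcomp Require Import fingroup perm.
From Stdlib Require Import Classical FunctionalExtensionality.
From mathcomp Require Import zify.
Local Open Scope ring_scope.

Module Helpers.
Set Implicit Arguments. Unset Strict Implicit. Unset Printing Implicit Defensive.
Import GRing.Theory.


Section Frame.
Variables (k K : closedFieldType) (f : {rmorphism k -> K}).

Definition pf N (g : 'rV[K]_N -> K) :=
  exists q : {mpoly k[N]}, forall x, g x = (map_mpoly f q).@[coords x].

Definition DD N (P : 'rV[K]_N -> Prop) := constructible_over f P.

Lemma meval_map N (p : {mpoly k[N]}) v :
  (map_mpoly f p).@[v] = \sum_(m <- msupp p) f p@_m * \prod_i v i ^+ m i.
Proof.
rewrite {1}(mpolyE p) (raddf_sum (map_mpoly f)) (raddf_sum (meval v)); apply: eq_bigr => m _.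
by rewrite /= map_mpolyZ mevalZ map_mpolyX mevalX.
Qed.

Lemma pf_ext N g h : @pf N g -> (forall x, g x = h x) -> pf h.
Proof. by move=> [p Hp] E; exists p => x; rewrite -E. Qed.

Lemma pf_const N c : pf (fun _ : 'rV[K]_N => f c).
Proof. by exists c%:MP => x; rewrite map_mpolyC mevalC. Qed.

Lemma pf_coord N i : pf (fun x : 'rV[K]_N => x 0 i).
Proof. by exists 'X_i => x; rewrite map_mpolyX mevalXU. Qed.

Lemma pf_add N g h : @pf N g -> pf h -> pf (fun x => g x + h x).
Proof.
move=> [p Hp] [q Hq]; exists (p + q) => x.
by rewrite rmorphD mevalD Hp Hq.
Qed.

Lemma pf_mul N g h : @pf N g -> pf h -> pf (fun x => g x * h x).
Proof.
move=> [p Hp] [q Hq]; exists (p * q) => x.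
by rewrite rmorphM mevalM Hp Hq.
Qed.

Lemma pf_opp N g : @pf N g -> pf (fun x => - g x).
Proof. by move=> [p Hp]; exists (- p) => x; rewrite rmorphN mevalN Hp. Qed.

Lemma pf_one N : pf (fun _ : 'rV[K]_N => 1).
Proof. by have := pf_const N 1; rewrite rmorph1. Qed.

Lemma pf_exp N g e : @pf N g -> pf (fun x => g x ^+ e).
Proof.
move=> H; elim: e => [|e IH]; first exact: pf_one.
by apply: (pf_ext (pf_mul H IH)) => x; rewrite exprS.
Qed.


Lemma pf_sum N (I : Type) (r : seq I) (P : pred I) (F : I -> 'rV[K]_N -> K) :
  (forall i, pf (F i)) -> pf (fun x => \sum_(i <- r | P i) F i x).
Proof.
move=> H; elim: r => [|i r IH].
  by apply: (pf_ext (pf_const N 0)) => x; rewrite rmorph0 big_nil.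
case Pi: (P i).
  by apply: (pf_ext (pf_add (H i) IH)) => x; rewrite big_cons Pi.
by apply: (pf_ext IH) => x; rewrite big_cons Pi.
Qed.

Lemma pf_prod N (I : Type) (r : seq I) (P : pred I) (F : I -> 'rV[K]_N -> K) :
  (forall i, pf (F i)) -> pf (fun x => \prod_(i <- r | P i) F i x).
Proof.
move=> H; elim: r => [|i r IH].
  by apply: (pf_ext (pf_one N)) => x; rewrite big_nil.
case Pi: (P i).
  by apply: (pf_ext (pf_mul (H i) IH)) => x; rewrite big_cons Pi.
by apply: (pf_ext IH) => x; rewrite big_cons Pi.
Qed.

Lemma pf_subst N M (p : {mpoly k[M]}) (h : 'I_M -> 'rV[K]_N -> K) :
  (forall i, pf (h i)) -> pf (fun x => (map_mpoly f p).@[fun i => h i x]).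
Proof.
move=> H; apply: (pf_ext (g := fun x => \sum_(m <- msupp p) f p@_m * \prod_i h i x ^+ m i)).
  apply: (@pf_sum _ _ _ xpredT) => m; apply: pf_mul; first exact: pf_const.
  by apply: (@pf_prod _ _ _ xpredT) => i; apply: pf_exp.
by move=> x; rewrite meval_map.
Qed.

Lemma pf_det N n (F : 'I_n -> 'I_n -> 'rV[K]_N -> K) :
  (forall i j, pf (F i j)) -> pf (fun x => \det (\matrix_(i, j) F i j x)).
Proof.
move=> H.
apply: (pf_ext (g := fun x => \sum_(s : 'S_n) (-1) ^+ s * \prod_(i < n) F i (s i) x)).
  apply: (@pf_sum _ _ _ xpredT) => s; apply: pf_mul.
    by apply: pf_exp; apply: pf_opp; apply: pf_one.
  by apply: (@pf_prod _ _ _ xpredT) => i.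
move=> x; rewrite /determinant; apply: eq_bigr => s _; congr (_ * _).
by apply: eq_bigr => i _; rewrite mxE.
Qed.

Lemma DD_ext N P Q : @DD N P -> (forall x, P x <-> Q x) -> DD Q.
Proof. by move=> [phi H] E; exists phi => x; rewrite -E. Qed.

Lemma DD_zero N g : @pf N g -> DD (fun x => g x = 0).
Proof. by move=> [q Hq]; exists (CZero q) => x /=; rewrite Hq. Qed.

Lemma DD_true N : DD (fun _ : 'rV[K]_N => True).
Proof. by exists (CTrue _ _). Qed.

Lemma DD_not N P : @DD N P -> DD (fun x => ~ P x).
Proof. by move=> [phi H]; exists (CNot phi) => x /=; rewrite H. Qed.

Lemma DD_false N : DD (fun _ : 'rV[K]_N => False).
Proof. by apply: (DD_ext (DD_not (DD_true N))) => x; split. Qed.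

Lemma DD_and N P Q : @DD N P -> DD Q -> DD (fun x => P x /\ Q x).
Proof. by move=> [phi H] [psi H']; exists (CAnd phi psi) => x /=; rewrite H H'. Qed.

Lemma DD_or N P Q : @DD N P -> DD Q -> DD (fun x => P x \/ Q x).
Proof. by move=> [phi H] [psi H']; exists (COr phi psi) => x /=; rewrite H H'. Qed.

Lemma DD_imp N P Q : @DD N P -> DD Q -> DD (fun x => P x -> Q x).
Proof.
move=> HP HQ; apply: (DD_ext (DD_or (DD_not HP) HQ)) => x.
split; first by case=> H1 H2 //; case: (H1 H2).
by move=> H; case: (Classical_Prop.classic (P x)) => H'; [right; apply: H|left].
Qed.

Lemma DD_ex_seq N (T : eqType) (l : seq T) (P : T -> 'rV[K]_N -> Prop) :
  (forall t, DD (P t)) -> DD (fun x => exists2 t, t \in l & P t x).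
Proof.
move=> H; elim: l => [|t l IH].
  by apply: (DD_ext (DD_false N)) => x; split=> // [[]].
apply: (DD_ext (DD_or (H t) IH)) => x; split.
  by case=> [Pt|[u ul Pu]]; [exists t; rewrite ?mem_head | exists u; rewrite // inE ul orbT].
by case=> u; rewrite inE => /orP[/eqP->|ul] Pu; [left|right; exists u].
Qed.

Lemma DD_ex N (T : finType) (P : T -> 'rV[K]_N -> Prop) :
  (forall t, DD (P t)) -> DD (fun x => exists t, P t x).
Proof.
move=> H; apply: (DD_ext (DD_ex_seq (enum T) H)) => x; split.
  by case=> t _ Pt; exists t.
by case=> t Pt; exists t; rewrite ?mem_enum.
Qed.

Lemma DD_all_seq N (T : eqType) (l : seq T) (P : T -> 'rV[K]_N -> Prop) :
  (forall t, DD (P t)) -> DD (fun x => forall t, t \in l -> P t x).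
Proof.
move=> H; elim: l => [|t l IH].
  by apply: (DD_ext (DD_true N)) => x; split.
apply: (DD_ext (DD_and (H t) IH)) => x; split.
  by case=> Pt Hl u; rewrite inE => /orP[/eqP->|/Hl].
by move=> Hx; split=> [|u ul]; apply: Hx; rewrite inE ?eqxx ?ul ?orbT.
Qed.

Lemma DD_all N (T : finType) (P : T -> 'rV[K]_N -> Prop) :
  (forall t, DD (P t)) -> DD (fun x => forall t, P t x).
Proof.
move=> H; apply: (DD_ext (DD_all_seq (enum T) H)) => x; split.
  by move=> Hx t; apply: Hx; rewrite mem_enum.
by move=> Hx t _.
Qed.

Lemma DD_neq0 N g : @pf N g -> DD (fun x => g x != 0).
Proof.
move=> H; apply: (DD_ext (DD_not (DD_zero H))) => x.
by split=> [/eqP|/eqP].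
Qed.

Lemma DD_bool N (b : bool) : DD (fun _ : 'rV[K]_N => b).
Proof. by case: b; [apply: (DD_ext (DD_true N))|apply: (DD_ext (DD_false N))]. Qed.

End Frame.



Section LA.
Variable K : fieldType.

Definition minorP r m n (B : 'M[K]_(m, n)) : Prop :=
  exists (g : {ffun 'I_r -> 'I_m}) (h : {ffun 'I_r -> 'I_n}),
    \det (mxsub g h B) != 0.

Lemma minorP_le r m n (B : 'M[K]_(m, n)) : minorP r B -> (r <= \rank B)%N.
Proof.
case=> g [h] Hd.
have U : mxsub g h B \in unitmx by rewrite unitmxE unitfE.
rewrite -(mxrank_unit U) mxsubrc.
apply: (leq_trans (mxrankS (rowsub_sub _ _))).
rewrite -mxrank_tr -[X in (_ <= X)%N]mxrank_tr trmx_mxsub. exact: (mxrankS (rowsub_sub _ _)).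
Qed.

Lemma minorP_rank m n (B : 'M[K]_(m, n)) : minorP (\rank B) B.
Proof.
pose g := maxrankfun B.
have Hf : row_free (rowsub g B) := maxrowsub_free B.
have Hfull : row_full (rowsub g B)^T.
  by rewrite /row_full mxrank_tr; move: Hf; rewrite /row_free.
pose h := fullrankfun Hfull.
exists g, h.
have U := fullrowsub_unit Hfull.
rewrite -/h in U.
have -> : mxsub g h B = (rowsub h (rowsub g B)^T)^T.
  by apply/matrixP => i j; rewrite !mxE.
by rewrite det_tr -unitfE -unitmxE.
Qed.

Definition inspan m n (u : 'rV[K]_n) (W : 'M[K]_(m, n)) : Prop :=
  forall r : 'I_(m.+2), minorP r (col_mx W u) ->
    exists2 r' : 'I_(m.+2), (r <= r')%N & minorP r' W.

Lemma inspanP m n (u : 'rV[K]_n) (W : 'M[K]_(m, n)) :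
  inspan u W <-> (u <= W)%MS.
Proof.
have rkE : \rank (col_mx W u) = \rank (W + u)%MS by rewrite (addsmxE W u).
split.
  move=> H.
  have lt : (\rank (col_mx W u) < m.+2)%N.
    by rewrite ltnS (leq_trans (rank_leq_row _)) // addn1.
  have [r' le Hr'] := H (Ordinal lt) (minorP_rank _).
  have le2 := leq_trans le (minorP_le Hr').
  rewrite /= rkE in le2.
  have := mxrank_leqif_sup (addsmxSl W u).
  move=> [_ /esym E].
  have : \rank W == \rank (W + u)%MS by rewrite eqn_leq le2 mxrankS // addsmxSl.
  by rewrite -E addsmx_sub => /andP[].
move=> sub r Hr.
have E : \rank (col_mx W u) = \rank W by rewrite rkE (addsmx_idPl sub).
have lt : (\rank W < m.+2)%N by rewrite ltnS (leq_trans (rank_leq_row _)).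
exists (Ordinal lt); last exact: minorP_rank.
by rewrite /= -E minorP_le.
Qed.

End LA.



Section Fam.
Variables (K : fieldType) (s W : nat) (T : 'rV[K]_s -> Prop) (v : 'rV[K]_s -> 'rV[K]_W).

Definition Wm (fam : 'I_W -> 'rV[K]_s) : 'M[K]_(W, W) := \matrix_j v (fam j).

Lemma span_family_aux n (fam : 'I_W -> 'rV[K]_s) :
  (forall j, T (fam j)) -> (W - \rank (Wm fam) <= n)%N ->
  exists fam' : 'I_W -> 'rV[K]_s, (forall j, T (fam' j)) /\
     forall y, T y -> (v y <= Wm fam')%MS.
Proof.
elim: n fam => [|n IH] fam Tf Hn.
  exists fam; split => // y _; apply: submx_full.
  rewrite /row_full eqn_leq rank_leq_col /=.
  by move: Hn; rewrite leqn0 subn_eq0.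
case: (classic (forall y, T y -> (v y <= Wm fam)%MS)).
  move=> H.
  by exists fam.
move=> /not_all_ex_not [y Hy0]; have [Ty Hy] := imply_to_and _ _ Hy0.
have nf : ~~ row_free (Wm fam).
  apply/negP => rf; apply: Hy; apply: submx_full.
  by rewrite row_full_unit -row_free_unit.
case/row_freePn: nf => i Hi.
pose fam' := fun j => if j == i then y else fam j.
have Tf' : forall j, T (fam' j) by move=> j; rewrite /fam'; case: (j == i).
have lt : (Wm fam < Wm fam')%MS.
  rewrite ltmxE; apply/andP; split.
    apply/row_subP => j; rewrite /Wm rowK.
    have [->|ne] := eqVneq j i.
      rewrite -(rowK (fun j => v (fam j)) i) -/(Wm fam).
      apply: (submx_trans Hi); apply/row_subP => l.
      rewrite row'Esub row_rowsub /Wm rowK.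
      apply: (eq_row_sub (lift i l)); rewrite rowK /fam'.
      by rewrite eq_sym (negPf (neq_lift _ _)).
    by apply: (eq_row_sub j); rewrite rowK /fam' (negPf ne).
  apply/negP => sub; apply: Hy; apply: submx_trans sub.
  by apply: (eq_row_sub i); rewrite rowK /fam' eqxx.
apply: (IH fam' Tf').
move: lt; rewrite ltmxErank => /andP[_ lt].
have le : (\rank (Wm fam') <= W)%N by apply: rank_leq_col.
move: Hn; lia.
Qed.

Lemma span_family y0 : T y0 ->
  exists fam : 'I_W -> 'rV[K]_s, (forall j, T (fam j)) /\
     forall y, T y -> (v y <= Wm fam)%MS.
Proof.
move=> Ty0; apply: (@span_family_aux W (fun _ => y0)) => //.
exact: leq_subr.
Qed.

End Fam.



Section Decomp.
Variables (K : closedFieldType) (s t : nat).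

Definition Wq (q : {mpoly K[s + t]}) := size (msupp q).
Definition mono (q : {mpoly K[s + t]}) (j : 'I_(Wq q)) : 'X_{1..s + t} :=
  nth 0%MM (msupp q) j.
Definition vx (q : {mpoly K[s + t]}) (x : 'rV[K]_s) : 'rV[K]_(Wq q) :=
  \row_j \prod_(i < s) x 0 i ^+ (mono j (lshift t i)).
Definition cb (q : {mpoly K[s + t]}) (b : 'rV[K]_t) : 'rV[K]_(Wq q) :=
  \row_j (q@_(mono j) * \prod_(i < t) b 0 i ^+ (mono j (rshift s i))).

Lemma decomp q x b :
  q.@[coords (row_mx x b)] = \sum_j vx q x 0 j * cb q b 0 j.
Proof.
rewrite mevalE (big_nth 0%MM) big_mkord; apply: eq_bigr => j _.
rewrite !mxE big_split_ord /= /coords.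
under eq_bigr do rewrite row_mxEl.
under [X in _ * (_ * X)]eq_bigr do rewrite row_mxEr.
rewrite /mono; set P1 := \prod_(i < s) _; set P2 := \prod_(i < t) _.
by rewrite mulrCA.
Qed.

End Decomp.

Section Main.
Variables (k K : closedFieldType) (f : {rmorphism k -> K}) (s t : nat).
Variable S : 'rV[K]_(2 * s) -> Prop.

Definition Sflag (c0 c1 : 'rV[K]_s) := S (tuple_pt (p_tuple c0 c1 (ord0 : 'I_2))).

Definition qid (p : {mpoly K[s + t]}) : {mpoly K[s + t]} := map_mpoly (@id K) p.

Fixpoint nparams (phi : cform K (s + t)) : nat :=
  match phi with
  | CTrue => 0
  | CZero p => 2 + Wq (qid p)
  | CNot a => nparams a
  | CAnd a b => nparams a + nparams b
  | COr a b => nparams a + nparams b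
  end.

Local Unset Implicit Arguments.
Fixpoint Zrec (phi : cform K (s + t)) (x : 'rV[K]_s) :
    ('I_(nparams phi) -> 'rV[K]_s) -> Prop :=
  match phi return ('I_(nparams phi) -> 'rV[K]_s) -> Prop with
  | CTrue => fun _ => True
  | CZero p => fun a =>
      Sflag (a (lshift _ (ord0 : 'I_2))) (a (lshift _ (ord_max : 'I_2))) /\
      inspan (vx (qid p) x) (Wm (vx (qid p)) (fun j => a (rshift 2 j)))
  | CNot a1 => fun a => ~ Zrec a1 x a
  | CAnd a1 a2 => fun a =>
      Zrec a1 x (fun i => a (lshift _ i)) /\ Zrec a2 x (fun i => a (rshift _ i))
  | COr a1 a2 => fun a =>
      Zrec a1 x (fun i => a (lshift _ i)) \/ Zrec a2 x (fun i => a (rshift _ i))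
  end.
Local Set Implicit Arguments.

Definition ppf N (F : 'rV[K]_N -> 'rV[K]_s) := forall i, pf f (fun z => F z 0 i).

Lemma pf_vx N (q : {mpoly K[s + t]}) (F : 'rV[K]_N -> 'rV[K]_s) j :
  ppf F -> pf f (fun z => vx q (F z) 0 j).
Proof.
move=> H; apply: (pf_ext (g := fun z => \prod_(i < s) F z 0 i ^+ (mono j (lshift t i)))).
  by apply: (@pf_prod _ _ _ _ _ _ xpredT) => i; apply: pf_exp.
by move=> z; rewrite mxE.
Qed.

Lemma pf_col_mx N m1 m2 n (A : 'rV[K]_N -> 'M[K]_(m1, n)) (B : 'rV[K]_N -> 'M[K]_(m2, n)) :
  (forall i j, pf f (fun z => A z i j)) -> (forall i j, pf f (fun z => B z i j)) ->
  forall i j, pf f (fun z => col_mx (A z) (B z) i j).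
Proof.
move=> HA HB i j; rewrite -(splitK i); case: (split i) => i' /=.
  by apply: (pf_ext (HA i' j)) => z; rewrite col_mxEu.
by apply: (pf_ext (HB i' j)) => z; rewrite col_mxEd.
Qed.

Lemma DD_minor N r m n (B : 'rV[K]_N -> 'M[K]_(m, n)) :
  (forall i j, pf f (fun z => B z i j)) -> DD f (fun z => minorP r (B z)).
Proof.
move=> H; apply: DD_ex => g; apply: DD_ex => h; apply: DD_neq0.
by apply: pf_det => i j; apply: H.
Qed.

Lemma DD_inspan N m n (u : 'rV[K]_N -> 'rV[K]_n) (B : 'rV[K]_N -> 'M[K]_(m, n)) :
  (forall j, pf f (fun z => u z 0 j)) -> (forall i j, pf f (fun z => B z i j)) ->
  DD f (fun z => inspan (u z) (B z)).
Proof.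
move=> Hu HB.
have Hu' : forall (i : 'I_1) j, pf f (fun z => u z i j).
  by move=> i j; rewrite (ord1 i).
have Hc := pf_col_mx HB Hu'.
apply: (DD_all (T := 'I_(m.+2))) => r.
apply: DD_imp; first exact: DD_minor.
have H2 : forall r' : 'I_(m.+2), DD f (fun z => (r <= r')%N /\ minorP r' (B z)).
  by move=> r'; apply: DD_and; [apply: DD_bool|apply: DD_minor].
apply: (DD_ext (DD_ex H2)).
by move=> z; split; [case=> r' [] *; exists r'|case=> r' *; exists r'].
Qed.


Lemma DD_flag N (F0 F1 : 'rV[K]_N -> 'rV[K]_s) :
  kclosed f S -> ppf F0 -> ppf F1 -> DD f (fun z => Sflag (F0 z) (F1 z)).
Proof.
move=> [ps Hps] H0 H1.
pose G z := tuple_pt (p_tuple (F0 z) (F1 z) (ord0 : 'I_2)).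
have Hc : forall i, pf f (fun z => G z 0 i).
  move=> i; case: (mxvec_indexP i) => a j.
  apply: (pf_ext (g := fun z => if a == ord0 then F1 z 0 j else F0 z 0 j)).
    by case: (a == ord0).
  by move=> z; rewrite /G /tuple_pt mxvecE mxE /p_tuple; case: (a == ord0).
apply: (DD_ext (P := fun z => forall p, p \in ps -> (map_mpoly f p).@[coords (G z)] = 0)).
  apply: DD_all_seq => p; apply: DD_zero; exact: (pf_subst p Hc).
by move=> z; rewrite /Sflag Hps.
Qed.

Lemma DD_Zrec (phi : cform K (s + t)) N (X : 'rV[K]_N -> 'rV[K]_s)
    (Aa : 'rV[K]_N -> 'I_(nparams phi) -> 'rV[K]_s) :
  kclosed f S -> ppf X -> (forall l, ppf (fun z => Aa z l)) ->
  DD f (fun z => Zrec phi (X z) (Aa z)).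
Proof.
move=> HS; elim: phi N X Aa => [|p|a IH|a IHa b IHb|a IHa b IHb] N X Aa HX HA /=.
- exact: DD_true.
- apply: DD_and; first exact: (DD_flag HS (HA _) (HA _)).
  apply: DD_inspan => [j|i j]; first exact: pf_vx.
  apply: (pf_ext (g := fun z => vx (qid p) (Aa z (rshift 2 i)) 0 j)).
    exact: pf_vx.
  move=> z; unfold Wm; by rewrite !mxE.
- exact: DD_not (IH _ _ _ HX HA).
- by apply: DD_and; [apply: IHa|apply: IHb].
- by apply: DD_or; [apply: IHa|apply: IHb].
Qed.

Lemma split_l m n (i : 'I_m) : split (lshift n i) = inl i.
Proof. exact: (unsplitK (inl i)). Qed.
Lemma split_r m n (i : 'I_n) : split (rshift m i) = inr i.
Proof. exact: (unsplitK (inr i)). Qed.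

Lemma exists_params (A : 'rV[K]_s -> Prop) (al be : 'rV[K]_s) (b : 'rV[K]_t) :
  A al -> A be -> Sflag al be -> ~ Sflag be al ->
  forall phi : cform K (s + t), exists a : 'I_(nparams phi) -> 'rV[K]_s,
    (forall l, A (a l)) /\
    forall x, A x -> (cform_sat (@id K) phi (row_mx x b) <-> Zrec phi x a).
Proof.
move=> Aal Abe Son Soff.
elim=> [|p|a IH|a1 IHa b1 IHb|a1 IHa b1 IHb].
- by exists (fun _ => al); split.
- set q := qid p.
  pose Tr y := A y /\ q.@[coords (row_mx y b)] = 0.
  case: (classic (exists y, Tr y)) => [[y0 Ty0]|none].
    have [fam [Tf Hsp]] := span_family (vx q) Ty0.
    exists (fun i : 'I_(2 + Wq q) => match split i with inl j => if j == ord0 then al else be | inr j => fam j end).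
    split.
      by move=> l; case: (split l) => [j|j]; [case: (j == ord0)|case: (Tf j)].
    move=> x Ax /=; rewrite !split_l /=.
    have -> : (fun j => match split (rshift 2 j) with inl j0 => if j0 == ord0 then al else be | inr j0 => fam j0 end) = fam.
      by apply: functional_extensionality => j; rewrite split_r.
    rewrite inspanP; split.
      by move=> H; split => //; apply: (Hsp x); split.
    case=> _ /submxP [D HD].
    rewrite -/q decomp.
    have Z0 : Wm (vx q) fam *m (cb q b)^T = 0.
      apply/matrixP => i j; rewrite (ord1 j) !mxE.
      case: (Tf i) => _; rewrite decomp => E; rewrite -[RHS]E.
      by apply: eq_bigr => l _; rewrite !mxE.
    have : (vx q x *m (cb q b)^T) 0 0 = 0 by rewrite HD -mulmxA Z0 mulmx0 mxE.
    move=> E; rewrite -[RHS]E mxE; apply: eq_bigr => l _; by rewrite !mxE.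
  exists (fun i : 'I_(2 + Wq q) => match split i with inl j => if j == ord0 then be else al | inr j => al end).
  split.
    by move=> l; case: (split l) => [j|j] //; case: (j == ord0).
  move=> x Ax /=; rewrite !split_l /=.
  split; first by move=> H; case: none; exists x; split.
  by case=> HS _; case: Soff.
- have [a0 [Ha0 E]] := IH; exists a0; split => // x Ax /=; by rewrite E.
- have [a0 [Ha0 E0]] := IHa; have [c0 [Hc0 F0]] := IHb.
  exists (fun i => match split i with inl j => a0 j | inr j => c0 j end).
  split; first by move=> l; case: (split l).
  move=> x Ax /=.
  have -> : (fun i => match split (lshift (nparams b1) i) with inl j => a0 j | inr j => c0 j end) = a0.
    by apply: functional_extensionality => j; rewrite split_l.
  have -> : (fun i => match split (rshift (nparams a1) i) with inl j => a0 j | inr j => c0 j end) = c0.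
    by apply: functional_extensionality => j; rewrite split_r.
  by rewrite E0 // F0.
- have [a0 [Ha0 E0]] := IHa; have [c0 [Hc0 F0]] := IHb.
  exists (fun i => match split i with inl j => a0 j | inr j => c0 j end).
  split; first by move=> l; case: (split l).
  move=> x Ax /=.
  have -> : (fun i => match split (lshift (nparams b1) i) with inl j => a0 j | inr j => c0 j end) = a0.
    by apply: functional_extensionality => j; rewrite split_l.
  have -> : (fun i => match split (rshift (nparams a1) i) with inl j => a0 j | inr j => c0 j end) = c0.
    by apply: functional_extensionality => j; rewrite split_r.
  by rewrite E0 // F0.
Qed.

End Main.

End Helpers.
Import Helpers.

Theorem lemma6p2 (k K : closedFieldType) (f : {rmorphism k -> K})
    (s t : nat) (Y : 'rV[K]_(s + t) -> Prop) (A : 'rV[K]_s -> Prop) :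
  constructible Y ->
  (exists alpha beta : 'rV[K]_s,
     A alpha /\ A beta /\
     forall (m : nat) (i j : 'I_m), i != j ->
       ~ kzar_closure f (tuple_pt (p_tuple alpha beta j))
                        (tuple_pt (p_tuple alpha beta i))) ->
  exists (n : nat) (Z : 'rV[K]_(s + n * s) -> Prop),
    constructible_over f Z /\
    forall b : 'rV[K]_t,
      exists a : 'I_n -> 'rV[K]_s,
        (forall l, A (a l)) /\
        forall x : 'rV[K]_s, A x ->
          (Y (row_mx x b) <-> Z (row_mx x (tuple_pt a))).
Proof.
move=> [phi HY] [al [be [Aal [Abe Hsep]]]].
have Hs := Hsep 2 ord_max ord0 isT.
have [S [HS [S0 S1]]] : exists S : 'rV[K]_(2 * s) -> Prop, kclosed f S /\
    S (tuple_pt (p_tuple al be ord0)) /\ ~ S (tuple_pt (p_tuple al be ord_max)).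
  apply: NNPP => H; apply: Hs => S HS S0; apply: NNPP => S1; apply: H.
  by exists S.
have Son : Sflag S al be by [].
have Soff : ~ Sflag S be al.
  rewrite /Sflag; have -> : p_tuple be al (ord0 : 'I_2) = p_tuple al be ord_max.
    apply: functional_extensionality => i; rewrite /p_tuple.
    by case: i => [[|[|m]] Hi].
  exact: S1.
exists (nparams phi).
exists (fun z => Zrec K s t S phi (lsubmx z) (fun l => row l (vec_mx (rsubmx z) : 'M_(nparams phi, s)))).
split.
  apply: DD_Zrec => //.
    by move=> i; apply: (pf_ext (g := fun z => z 0 (lshift _ i))); [apply: pf_coord|move=> z; rewrite mxE].
  by move=> l i; apply: (pf_ext (g := fun z => z 0 (rshift _ (mxvec_index l i)))); [apply: pf_coord|move=> z; rewrite !mxE].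
move=> b.
have [a [Ha E]] := @exists_params K s t S A al be b Aal Abe Son Soff phi.
exists a; split => // x Ax.
rewrite HY E // row_mxKl row_mxKr /tuple_pt mxvecK.
suff -> : (fun l => row l (\matrix_i a i)) = a by [].
by apply: functional_extensionality => l; rewrite rowK.
Qed.
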